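(* Let $\alpha\in(0,1)$ be irrational and let $s_\alpha$ be a Sturmian word of angle $\alpha$. If $s_\alpha$ is $\beta$-power free for some $\beta\ge 2$, then $s_\alpha$ is uniformly abelian-square rich.
   Context: Alphabet $\{a,b\}$; $\{x\}=x-\lfloor x\rfloor$. For irrational $\alpha\in(0,1)$ and $\rho\in[0,1)$, the Sturmian word $s_{\alpha,\rho}=c_0c_1\cdots$ has $c_m=b$ if $\{\rho+m\alpha\}\in[0,1-\alpha)$ and $c_m=a$ otherwise (or with intervals $(0,1-\alpha]$ and $(1-\alpha,1]$); $s_\alpha$ denotes any such word. An infinite word is $\beta$-power free if for every nonempty factor $v$, the ratio of $|v|$ to the minimal period of $v$ is smaller than $\beta$. An abelian square is a word $v_1v_2$ with $v_1,v_2$ having the same numbers of each letter. An infinite word $w$ is uniformly abelian-square rich if there is a constant $C>0$ such that for all sufficiently large $n$, every factor of $w$ of length $n$ has at least $Cn^2$ distinct factors that are abelian squares. *)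

(* Defs.v *)
From Stdlib Require Import Reals Lra Lia ZArith Arith List.
Import ListNotations.
Open Scope R_scope.

Inductive letter : Set := la | lb.

Definition letter_eq_dec : forall x y : letter, {x = y} + {x <> y}.
Proof. decide equality. Defined.

Definition word := list letter.
Definition infword := nat -> letter.

Definition frac (x : R) : R := x - IZR (Int_part x).

Definition irrational (x : R) : Prop :=
  ~ exists (p : Z) (q : nat), (0 < q)%nat /\ x = IZR p / INR q.

Definition sturmian_lower (alpha rho : R) : infword := fun m =>
  if Rlt_dec (frac (rho + INR m * alpha)) (1 - alpha) then lb else la.

(* variant with intervals (0, 1-alpha] (letter b) and (1-alpha, 1] (letter a);
   here {x} = 0 is read as the point 1 of (1-alpha,1] (ceiling convention). *)
Definition sturmian_upper (alpha rho : R) : infword := fun m =>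
  if Rlt_dec 0 (frac (rho + INR m * alpha)) then
    if Rle_dec (frac (rho + INR m * alpha)) (1 - alpha) then lb else la
  else la.

Definition sturmian (upper : bool) (alpha rho : R) : infword :=
  if upper then sturmian_upper alpha rho else sturmian_lower alpha rho.

Definition factor_at (w : infword) (i n : nat) : word := map w (seq i n).

Definition is_factor (w : infword) (v : word) : Prop :=
  exists i, v = factor_at w i (length v).

Definition is_subfactor (u v : word) : Prop :=
  exists x y, u = x ++ v ++ y.

Definition is_period (v : word) (p : nat) : Prop :=
  (0 < p)%nat /\ forall i, (i + p < length v)%nat -> nth i v la = nth (i + p) v la.

Definition is_min_period (v : word) (p : nat) : Prop :=
  is_period v p /\ forall q, (0 < q < p)%nat -> ~ is_period v q.

Definition power_free (beta : R) (w : infword) : Prop :=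
  forall v p, is_factor w v -> v <> [] -> is_min_period v p ->
    INR (length v) / INR p < beta.

Definition parikh_eq (v1 v2 : word) : Prop :=
  count_occ letter_eq_dec v1 la = count_occ letter_eq_dec v2 la /\
  count_occ letter_eq_dec v1 lb = count_occ letter_eq_dec v2 lb.

Definition abelian_square (v : word) : Prop :=
  exists v1 v2, v = v1 ++ v2 /\ parikh_eq v1 v2.

Definition has_many_ab_squares (u : word) (k : R) : Prop :=
  exists L : list word, NoDup L /\
    (forall v, In v L -> is_subfactor u v /\ abelian_square v) /\
    k <= INR (length L).

Definition unif_ab_square_rich (w : infword) : Prop :=
  exists C : R, 0 < C /\ exists N : nat, forall n : nat, (N <= n)%nat ->
    forall u : word, is_factor w u -> length u = n ->
      has_many_ab_squares u (C * INR n ^ 2).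

(* Main.v *)
Require Import Defs.
From Stdlib Require Import Reals Lra Lia ZArith Arith List Classical.
Import ListNotations.
Open Scope R_scope.

Lemma Int_part_uniq (x : R) (z : Z) : IZR z <= x -> x < IZR z + 1 -> Int_part x = z.
Proof.
  intros H1 H2. unfold Int_part.
  assert (up x = (z + 1)%Z) as ->; [|lia].
  symmetry; apply tech_up; rewrite plus_IZR; lra.
Qed.

Lemma Int_part_bnd (x : R) : IZR (Int_part x) <= x /\ x < IZR (Int_part x) + 1.
Proof. destruct (base_Int_part x); lra. Qed.

Lemma floor_step (x a : R) : 0 < a < 1 ->
  (frac x < 1 - a /\ Int_part (x + a) = Int_part x) \/
  (~ frac x < 1 - a /\ Int_part (x + a) = (Int_part x + 1)%Z).
Proof.
  intros Ha. destruct (Int_part_bnd x) as [H1 H2]. unfold frac.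
  destruct (Rlt_dec (x - IZR (Int_part x)) (1 - a)).
  - left; split; auto. apply Int_part_uniq; lra.
  - right; split; auto. apply Int_part_uniq; rewrite plus_IZR; lra.
Qed.

Definition ceilZ (x : R) : Z := (- Int_part (- x))%Z.

Lemma ceil_step (x a : R) : 0 < a < 1 ->
  (0 < frac x /\ frac x <= 1 - a /\ ceilZ (x + a) = ceilZ x) \/
  ((~ 0 < frac x \/ ~ frac x <= 1 - a) /\ ceilZ (x + a) = (ceilZ x + 1)%Z).
Proof.
  intros Ha. destruct (Int_part_bnd x) as [H1 H2]. unfold frac, ceilZ.
  set (z := Int_part x) in *.
  destruct (Rlt_dec 0 (x - IZR z)).
  - destruct (Rle_dec (x - IZR z) (1 - a)).
    + left; repeat split; auto.
      rewrite (Int_part_uniq (-x) (-z-1)), (Int_part_uniq (-(x+a)) (-z-1)); try lia;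
        rewrite ?minus_IZR, ?opp_IZR; lra.
    + right; split; auto.
      rewrite (Int_part_uniq (-x) (-z-1)), (Int_part_uniq (-(x+a)) (-z-2)); try lia;
        rewrite ?minus_IZR, ?opp_IZR; lra.
  - right; split; auto.
    assert (x = IZR z) by lra.
    rewrite (Int_part_uniq (-x) (-z)), (Int_part_uniq (-(x+a)) (-z-1)); try lia;
        rewrite ?minus_IZR, ?opp_IZR; lra.
Qed.

Lemma ceil_bnd (x : R) : x <= IZR (ceilZ x) < x + 1.
Proof.
  unfold ceilZ. destruct (Int_part_bnd (-x)). rewrite opp_IZR. lra.
Qed.

Definition HW (w : infword) (H : nat -> Z) : Prop :=
  forall j, (w j = la /\ H (S j) = (H j + 1)%Z) \/ (w j = lb /\ H (S j) = H j).

Lemma count_a (w : infword) H : HW w H -> forall m i,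
  Z.of_nat (count_occ letter_eq_dec (factor_at w i m) la) = (H (i + m)%nat - H i)%Z.
Proof.
  intros HH m. induction m; intros i.
  - simpl. rewrite Nat.add_0_r. lia.
  - unfold factor_at in *. simpl. specialize (IHm (S i)). simpl Nat.add in IHm.
    rewrite Nat.add_succ_r.
    destruct (HH i) as [[E1 E2]|[E1 E2]]; rewrite E1; simpl.
    + rewrite Zpos_P_of_succ_nat. lia.
    + lia.
Qed.

Lemma count_ab (v : word) :
  (count_occ letter_eq_dec v la + count_occ letter_eq_dec v lb = length v)%nat.
Proof.
  induction v as [|x v IH]; simpl; auto.
  destruct x; simpl; lia.
Qed.

Lemma factor_len w i n : length (factor_at w i n) = n.
Proof. unfold factor_at. rewrite length_map, length_seq. auto. Qed.

Lemma factor_split w i a b : factor_at w i (a + b) = factor_at w i a ++ factor_at w (i + a) b.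
Proof. unfold factor_at. rewrite seq_app, map_app. auto. Qed.

Lemma absq_of_good w H : HW w H -> forall i m,
  (H (i + m)%nat - H i = H (i + m + m)%nat - H (i + m)%nat)%Z ->
  abelian_square (factor_at w i (m + m)).
Proof.
  intros HH i m E. exists (factor_at w i m), (factor_at w (i+m) m).
  split. apply factor_split.
  pose proof (count_a w H HH m i) as A1. pose proof (count_a w H HH m (i+m)) as A2.
  assert (count_occ letter_eq_dec (factor_at w i m) la = count_occ letter_eq_dec (factor_at w (i+m) m) la) as Ea by lia.
  split; auto.
  pose proof (count_ab (factor_at w i m)). pose proof (count_ab (factor_at w (i+m) m)).
  rewrite !factor_len in *. lia.
Qed.

Lemma subfactor_of w s n i M : (s <= i)%nat -> (i + M <= s + n)%nat ->
  is_subfactor (factor_at w s n) (factor_at w i M).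
Proof.
  intros H1 H2. exists (factor_at w s (i - s)), (factor_at w (i+M) (s + n - (i + M))).
  replace n with ((i - s) + (M + (s + n - (i+M))))%nat at 1 by lia.
  rewrite factor_split, factor_split. f_equal. f_equal. f_equal. lia. f_equal. lia.
Qed.

Fixpoint G (H : nat -> Z) (x m : nat) : Z :=
  match m with 0 => 0%Z | S m' => (H x + G H (S x) m')%Z end.

Lemma G_step H m : forall x, (G H (S x) m - G H x m = H (x + m)%nat - H x)%Z.
Proof.
  induction m; intros x; simpl. rewrite Nat.add_0_r. lia.
  specialize (IHm (S x)). rewrite Nat.add_succ_r. simpl in IHm. lia.
Qed.

Fixpoint sumf (f : nat -> Z) (a L : nat) : Z :=
  match L with 0 => 0%Z | S L' => (f a + sumf f (S a) L')%Z end.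

Lemma sumf_G H m L : forall a,
  sumf (fun i => H (i + m)%nat - H i)%Z a L = (G H (a + L) m - G H a m)%Z.
Proof.
  induction L; intros a; simpl. rewrite Nat.add_0_r. lia.
  rewrite IHL. pose proof (G_step H m a). rewrite Nat.add_succ_r. simpl. lia.
Qed.

Definition HB (H : nat -> Z) (alpha : R) : Prop :=
  forall i L, -1 < IZR (H (i + L)%nat) - IZR (H i) - INR L * alpha < 1.

Lemma G_bal H alpha : HB H alpha -> forall L m x,
  INR m * INR L * alpha - INR m <= IZR (G H (x + L) m - G H x m) <= INR m * INR L * alpha + INR m.
Proof.
  intros HH L m. induction m; intros x; simpl G.
  - simpl. lra.
  - specialize (IHm (S x)). simpl Nat.add in IHm. specialize (HH x L).
    rewrite minus_IZR in *. rewrite !plus_IZR. rewrite S_INR. lra.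
Qed.

Fixpoint cnt (p : nat -> bool) (a L : nat) : nat :=
  match L with 0 => 0%nat | S L' => ((if p a then 1 else 0) + cnt p (S a) L')%nat end.

Lemma cnt_app p L1 : forall a L2, cnt p a (L1 + L2) = (cnt p a L1 + cnt p (a + L1) L2)%nat.
Proof.
  induction L1; intros a L2; simpl. rewrite Nat.add_0_r; auto.
  rewrite IHL1. rewrite Nat.add_succ_r. simpl. lia.
Qed.

Lemma cnt_shift p m L : forall a, cnt (fun i => p (i + m)%nat) a L = cnt p (a + m) L.
Proof. induction L; intros a; simpl; auto. Qed.

Lemma cnt_le p L : forall a, (cnt p a L <= L)%nat.
Proof. induction L; intros a; simpl; auto. specialize (IHL (S a)). destruct (p a); lia. Qed.

Lemma cnt_cover (p q r : nat -> bool) L : (forall i, p i = true \/ q i = true \/ r i = true) ->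
  forall a, (L <= cnt p a L + cnt q a L + cnt r a L)%nat.
Proof.
  intros Hc. induction L; intros a; simpl. lia.
  specialize (IHL (S a)). destruct (Hc a) as [E|[E|E]]; rewrite E;
  destruct (p a), (q a), (r a); lia.
Qed.

Lemma cnt_filter p L : forall a, length (filter p (seq a L)) = cnt p a L.
Proof. induction L; intros a; simpl; auto. destruct (p a); simpl; rewrite IHL; auto. Qed.

Lemma sumf_hi (f : nat -> Z) k : (forall i, f i = k \/ f i = (k + 1)%Z) -> forall L a,
  sumf f a L = (Z.of_nat L * k + Z.of_nat (cnt (fun i => Z.eqb (f i) (k+1)) a L))%Z.
Proof.
  intros Hf. induction L; intros a; cbn [sumf cnt]. lia.
  rewrite IHL. destruct (Hf a) as [E|E]; rewrite E.
  - replace (k =? k+1)%Z with false by (symmetry; apply Z.eqb_neq; lia). lia.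
  - rewrite Z.eqb_refl. lia.
Qed.

Lemma sumf_lo (f : nat -> Z) k : (forall i, f i = k \/ f i = (k + 1)%Z) -> forall L a,
  sumf f a L = (Z.of_nat L * (k + 1) - Z.of_nat (cnt (fun i => Z.eqb (f i) k) a L))%Z.
Proof.
  intros Hf. induction L; intros a; cbn [sumf cnt]. lia.
  rewrite IHL. destruct (Hf a) as [E|E]; rewrite E.
  - rewrite Z.eqb_refl. lia.
  - replace (k+1 =? k)%Z with false by (symmetry; apply Z.eqb_neq; lia). lia.
Qed.

Lemma pigeon p l B : forall a, exists b, (b <= B)%nat /\
  (cnt p a (S B * l) <= S B * cnt p (a + b * l) l)%nat.
Proof.
  induction B; intros a.
  - exists 0%nat. rewrite Nat.add_0_r. simpl. rewrite !Nat.add_0_r. lia.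
  - destruct (IHB (a + l)%nat) as [b [Hb1 Hb2]].
    replace (S (S B) * l)%nat with (l + S B * l)%nat by lia.
    rewrite cnt_app.
    destruct (le_lt_dec (cnt p (a + S b * l) l) (cnt p a l)).
    + exists 0%nat. split. lia. rewrite Nat.add_0_r.
      replace (a + l + b * l)%nat with (a + S b * l)%nat in Hb2 by lia. nia.
    + exists (S b). split. lia.
      replace (a + l + b * l)%nat with (a + S b * l)%nat in Hb2 by lia. nia.
Qed.

Lemma nth_factor w i n j : (j < n)%nat -> nth j (factor_at w i n) la = w (i + j)%nat.
Proof.
  intros Hj. unfold factor_at. rewrite nth_indep with (d' := w 0%nat).
  rewrite map_nth, seq_nth; auto. rewrite length_map, length_seq; auto.
Qed.

Lemma pf_no_repeat w beta K : power_free beta w -> beta <= INR K ->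
  forall i d M, (0 < d)%nat -> (K * d <= M)%nat ->
  factor_at w i M = factor_at w (i + d) M -> False.
Proof.
  intros Hpf HK i d M Hd HdM E.
  set (v := factor_at w i (d + M)).
  assert (Hvl : length v = (d + M)%nat) by (unfold v, factor_at; rewrite length_map, length_seq; auto).
  assert (Pd : is_period v d).
  { split; auto. intros j Hj. rewrite Hvl in Hj. unfold v.
    rewrite !nth_factor by lia.
    assert (nth j (factor_at w i M) la = nth j (factor_at w (i+d) M) la) as Ej by (rewrite E; auto).
    rewrite !nth_factor in Ej by lia.
    replace (i + (j + d))%nat with (i + d + j)%nat by lia. auto. }
  assert (Hex : exists p, is_period v p /\ forall q, (0 < q < p)%nat -> ~ is_period v q).
  { destruct (Wf_nat.dec_inh_nat_subset_has_unique_least_element (is_period v)) as [p [[Pp Pmin] _]].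
    - intros n; apply classic.
    - exists d; auto.
    - exists p; split; auto. intros q Hq Pq. specialize (Pmin q Pq). lia. }
  destruct Hex as [p [Pp Pmin]].
  assert (Hpd : (p <= d)%nat).
  { destruct (le_lt_dec p d); auto. exfalso. apply (Pmin d); auto. }
  assert (Hp0 : (0 < p)%nat) by (destruct Pp; auto).
  assert (Hne : v <> []) by (intros Ev; rewrite Ev in Hvl; simpl in Hvl; lia).
  assert (Hf : is_factor w v) by (exists i; rewrite Hvl; auto).
  pose proof (Hpf v p Hf Hne (conj Pp Pmin)) as Hlt.
  rewrite Hvl in Hlt.
  assert (HKp : (K * p <= d + M)%nat) by nia.
  apply le_INR in HKp. rewrite mult_INR in HKp.
  apply lt_INR in Hp0. simpl in Hp0.
  apply (Rmult_lt_compat_r (INR p)) in Hlt; auto.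
  unfold Rdiv in Hlt. rewrite Rmult_assoc, Rinv_l in Hlt by lra.
  assert (beta * INR p <= INR K * INR p) by (apply Rmult_le_compat_r; lra).
  lra.
Qed.

Definition nice (alpha : R) (m : nat) : Prop :=
  frac (INR m * alpha) <= 1/3 \/ 2/3 <= frac (INR m * alpha).

Lemma NoDup_map_on {A B} (g : A -> B) l : NoDup l ->
  (forall x y, In x l -> In y l -> g x = g y -> x = y) -> NoDup (map g l).
Proof.
  induction l as [|x l IH]; intros Hn Hi; simpl; constructor.
  - intros Hin. apply in_map_iff in Hin as [y [Ey Hy]].
    inversion Hn; subst. assert (y = x) by (apply Hi; simpl; auto). subst. contradiction.
  - inversion Hn; subst. apply IH; auto. intros; apply Hi; simpl; auto.
Qed.

Lemma core w H alpha beta K : HW w H -> HB H alpha -> power_free beta w -> beta <= INR K ->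
  (1 <= K)%nat -> forall r s n, (1 <= r)%nat -> nice alpha (K * r) -> (14 * K * r <= n)%nat ->
  exists Lr : list word, NoDup Lr /\
    (forall v, In v Lr -> is_subfactor (factor_at w s n) v /\ abelian_square v /\
        length v = (K * r + K * r)%nat) /\
    (r <= 6 * length Lr)%nat.
Proof.
  intros HW0 HB0 Hpf HK HK1 r s n Hr Hnice Hn.
  set (m := (K * r)%nat).
  set (f := fun i => (H (i + m)%nat - H i)%Z).
  set (k := Int_part (INR m * alpha)).
  destruct (Int_part_bnd (INR m * alpha)) as [Hk1 Hk2]. fold k in Hk1, Hk2.
  assert (Hf : forall i, f i = k \/ f i = (k + 1)%Z).
  { intros i. destruct (HB0 i m) as [B1 B2]. unfold f.
    assert (IZR (k - 1) < IZR (H (i+m)%nat - H i)) by (rewrite !minus_IZR; lra).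
    assert (IZR (H (i+m)%nat - H i) < IZR (k + 2)) by (rewrite minus_IZR, plus_IZR; lra).
    apply lt_IZR in H0. apply lt_IZR in H1. lia. }
  set (L := (12 * K * r)%nat).
  set (hi := fun i => Z.eqb (f i) (k + 1)).
  set (lo := fun i => Z.eqb (f i) k).
  assert (Hhi : forall a, INR (cnt hi a L) <= INR L * (INR m * alpha - IZR k) + INR m).
  { intros a. pose proof (sumf_hi f k Hf L a) as E1.
    pose proof (sumf_G H m L a) as E2. fold f in E2.
    pose proof (G_bal H alpha HB0 L m a) as E3.
    rewrite <- E2, E1 in E3. rewrite plus_IZR, mult_IZR, <- !INR_IZR_INZ in E3.
    fold hi in E3. nra. }
  assert (Hlo : forall a, INR (cnt lo a L) <= INR L * (1 - (INR m * alpha - IZR k)) + INR m).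
  { intros a. pose proof (sumf_lo f k Hf L a) as E1.
    pose proof (sumf_G H m L a) as E2. fold f in E2.
    pose proof (G_bal H alpha HB0 L m a) as E3.
    rewrite <- E2, E1 in E3. rewrite minus_IZR, mult_IZR, plus_IZR, <- !INR_IZR_INZ in E3.
    fold lo in E3. nra. }
  set (good := fun i => Z.eqb (f i) (f (i + m)%nat)).
  assert (C1 : (L <= cnt good s L + cnt hi s L + cnt hi (s + m) L)%nat).
  { rewrite <- cnt_shift. apply cnt_cover. intros i. unfold good, hi.
    destruct (Hf i) as [E|E]; destruct (Hf (i+m)%nat) as [E'|E']; rewrite E, E';
      rewrite ?Z.eqb_refl; auto. }
  assert (C2 : (L <= cnt good s L + cnt lo s L + cnt lo (s + m) L)%nat).
  { rewrite <- cnt_shift. apply cnt_cover. intros i. unfold good, lo.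
    destruct (Hf i) as [E|E]; destruct (Hf (i+m)%nat) as [E'|E']; rewrite E, E';
      rewrite ?Z.eqb_refl; auto. }
  assert (Hg : (2 * K * r <= cnt good s L)%nat).
  { apply INR_le. apply le_INR in C1. apply le_INR in C2. rewrite !plus_INR in C1, C2.
    pose proof (Hhi s). pose proof (Hhi (s + m)%nat). pose proof (Hlo s). pose proof (Hlo (s+m)%nat).
    unfold nice, frac in Hnice. fold m k in Hnice.
    assert (INR L = 12 * INR m) by (unfold L, m; rewrite !mult_INR; simpl; lra).
    assert (INR (2 * K * r) = 2 * INR m) by (unfold m; rewrite !mult_INR; simpl; lra).
    destruct Hnice; nra. }
  destruct (pigeon good r (12 * K - 1) s) as [b [Hb1 Hb2]].
  replace (S (12 * K - 1) * r)%nat with L in Hb2 by (unfold L; lia).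
  replace (S (12 * K - 1))%nat with (12 * K)%nat in Hb2 by lia.
  exists (map (fun i => factor_at w i (m + m)) (filter good (seq (s + b * r) r))).
  split; [|split].
  - apply NoDup_map_on. apply NoDup_filter, seq_NoDup.
    intros x y Hx Hy Exy. apply filter_In in Hx as [Hx _]. apply filter_In in Hy as [Hy _].
    apply in_seq in Hx. apply in_seq in Hy.
    destruct (lt_eq_lt_dec x y) as [[Hxy|Hxy]|Hxy]; auto; exfalso.
    + apply (pf_no_repeat w beta K Hpf HK x (y - x) (m + m)); try (unfold m; nia).
      replace (x + (y - x))%nat with y by lia. auto.
    + apply (pf_no_repeat w beta K Hpf HK y (x - y) (m + m)); try (unfold m; nia).
      replace (y + (x - y))%nat with x by lia. auto.
  - intros v Hv. apply in_map_iff in Hv as [i [Ei Hi]]. subst v.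
    apply filter_In in Hi as [Hi Hgi]. apply in_seq in Hi.
    split; [|split].
    + apply subfactor_of; unfold m; nia.
    + apply (absq_of_good w H HW0). unfold good, f in Hgi. apply Z.eqb_eq in Hgi.
      replace (i + m + m)%nat with (i + m + m)%nat by lia. auto.
    + apply factor_len.
  - rewrite length_map, cnt_filter. unfold m in *. nia.
Qed.

Lemma nice_or alpha m : nice alpha m \/ nice alpha (2 * m)%nat.
Proof.
  unfold nice, frac. rewrite mult_INR. simpl (INR 2).
  set (x := INR m * alpha).
  destruct (Int_part_bnd x) as [H1 H2]. set (z := Int_part x) in *.
  destruct (Rle_dec (x - IZR z) (1/3)); [left; left; auto|].
  destruct (Rle_dec (2/3) (x - IZR z)); [left; right; auto|].
  right. replace ((1 + 1) * INR m * alpha) with (2 * x) by (unfold x; ring).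
  destruct (Rlt_dec (2 * (x - IZR z)) 1).
  - rewrite (Int_part_uniq (2 * x) (2 * z)); rewrite ?mult_IZR; try lra.
  - rewrite (Int_part_uniq (2 * x) (2 * z + 1)); rewrite ?plus_IZR, ?mult_IZR; try lra.
Qed.

Lemma collect w H alpha beta K : HW w H -> HB H alpha -> power_free beta w -> beta <= INR K ->
  (1 <= K)%nat -> forall Q s n, (56 * K * Q <= n)%nat -> forall c, (c <= Q)%nat ->
  exists L : list word, NoDup L /\
    (forall v, In v L -> is_subfactor (factor_at w s n) v /\ abelian_square v /\
       exists r0, (Q + 1 <= r0 < Q + 1 + c)%nat /\
         (length v = (K * r0 + K * r0)%nat \/ length v = (K * (2 * r0) + K * (2 * r0))%nat)) /\
    (c * (Q + 1) <= 6 * length L)%nat.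
Proof.
  intros HW0 HB0 Hpf HK HK1 Q s n Hn c. induction c; intros Hc.
  - exists []. split; [constructor|split; [intros v0 []|simpl; lia]].
  - destruct IHc as [L [HL1 [HL2 HL3]]]; [lia|].
    set (r := (Q + 1 + c)%nat).
    assert (Hsel : exists r', (r' = r \/ r' = 2 * r)%nat /\ nice alpha (K * r')).
    { destruct (nice_or alpha (K * r)) as [N|N].
      - exists r; auto.
      - exists (2 * r)%nat; split; auto. replace (K * (2 * r))%nat with (2 * (K * r))%nat by lia. auto. }
    destruct Hsel as [r' [Hr' Hnr]].
    assert (Hr1 : (1 <= r')%nat) by (unfold r in *; lia).
    assert (Hr2 : (14 * K * r' <= n)%nat) by (unfold r in *; nia).
    destruct (core w H alpha beta K HW0 HB0 Hpf HK HK1 r' s n Hr1 Hnr Hr2) as [Lr [HR1 [HR2 HR3]]].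
    exists (Lr ++ L). split; [|split].
    + apply NoDup_app; auto. intros v Hv1 Hv2.
      destruct (HR2 v Hv1) as [_ [_ E1]]. destruct (HL2 v Hv2) as [_ [_ [r0 [Hr0 E2]]]].
      unfold r in *. destruct E2 as [E2|E2]; rewrite E1 in E2;
        (assert (K * r' = K * r0 \/ K * r' = K * (2 * r0))%nat as E3 by lia);
        (destruct E3 as [E3|E3]; apply Nat.mul_cancel_l in E3; lia).
    + intros v Hv. apply in_app_or in Hv as [Hv|Hv].
      * destruct (HR2 v Hv) as [A [B E]]. repeat split; auto. exists r. split. unfold r; lia.
        destruct Hr' as [->| ->]; auto.
      * destruct (HL2 v Hv) as [A [B [r0 [Hr0 E]]]]. repeat split; auto. exists r0. split; auto. lia.
    + rewrite length_app. unfold r in *. lia.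
Qed.

Definition Hfun (upper : bool) (alpha rho : R) : nat -> Z :=
  fun j => if upper then ceilZ (rho + INR j * alpha) else Int_part (rho + INR j * alpha).

Lemma y_step rho alpha j : rho + INR (S j) * alpha = (rho + INR j * alpha) + alpha.
Proof. rewrite S_INR. ring. Qed.

Lemma HW_st upper alpha rho : 0 < alpha < 1 -> HW (sturmian upper alpha rho) (Hfun upper alpha rho).
Proof.
  intros Ha j. unfold sturmian, Hfun. rewrite y_step. destruct upper.
  - unfold sturmian_upper. destruct (ceil_step (rho + INR j * alpha) alpha Ha) as [[A [B E]]|[A E]].
    + right. split; auto. destruct (Rlt_dec _ _); [|contradiction]. destruct (Rle_dec _ _); auto; contradiction.
    + left. split; auto. destruct (Rlt_dec _ _); auto. destruct (Rle_dec _ _); auto. destruct A; contradiction.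
  - unfold sturmian_lower. destruct (floor_step (rho + INR j * alpha) alpha Ha) as [[A E]|[A E]].
    + right. split; auto. destruct (Rlt_dec _ _); auto; contradiction.
    + left. split; auto. destruct (Rlt_dec _ _); auto; contradiction.
Qed.

Lemma HB_st upper alpha rho : HB (Hfun upper alpha rho) alpha.
Proof.
  intros i L. unfold Hfun. rewrite plus_INR.
  replace (rho + (INR i + INR L) * alpha) with ((rho + INR i * alpha) + INR L * alpha) by ring.
  destruct upper.
  - pose proof (ceil_bnd (rho + INR i * alpha)). pose proof (ceil_bnd (rho + INR i * alpha + INR L * alpha)). lra.
  - pose proof (Int_part_bnd (rho + INR i * alpha)). pose proof (Int_part_bnd (rho + INR i * alpha + INR L * alpha)). lra.
Qed.

Theorem corollary3 (alpha rho beta : R) (upper : bool) :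
  0 < alpha < 1 -> irrational alpha -> 0 <= rho < 1 ->
  2 <= beta -> power_free beta (sturmian upper alpha rho) ->
  unif_ab_square_rich (sturmian upper alpha rho).
Proof.
  intros Ha _ _ Hb Hpf.
  set (w := sturmian upper alpha rho).
  assert (HK : exists K, beta <= INR K /\ (1 <= K)%nat).
  { destruct (archimed beta) as [A _].
    exists (Z.to_nat (up beta)). assert (0 < up beta)%Z by (apply lt_IZR; simpl; lra).
    rewrite INR_IZR_INZ, Z2Nat.id by lia. split. lra. lia. }
  destruct HK as [K [HK HK1]].
  exists (/ INR (12 * 56 * 56 * K * K)). split.
  { apply Rinv_0_lt_compat. apply lt_0_INR. nia. }
  exists (112 * K)%nat. intros n Hn u [s Hu] Hlu.
  rewrite Hlu in Hu. subst u.
  set (Q := (n / (56 * K))%nat).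
  assert (HQ1 : (56 * K * Q <= n)%nat) by (unfold Q; apply Nat.Div0.mul_div_le).
  assert (HQ2 : (n < 56 * K * (Q + 1))%nat).
  { unfold Q. pose proof (Nat.div_mod n (56 * K)) as D. pose proof (Nat.mod_upper_bound n (56 * K)).
    lia. }
  destruct (collect w (Hfun upper alpha rho) alpha beta K (HW_st upper alpha rho Ha)
              (HB_st upper alpha rho) Hpf HK HK1 Q s n HQ1 Q (le_n Q)) as [L [HL1 [HL2 HL3]]].
  exists L. split; auto. split.
  - intros v Hv. destruct (HL2 v Hv) as [A [B _]]. auto.
  - assert (HQ3 : (2 <= Q)%nat) by nia.
    assert (HQ4 : (Q + 1 <= 2 * Q)%nat) by lia.
    assert (Hnn : (n * n <= 12 * 56 * 56 * K * K * length L)%nat).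
    { assert (n * n <= (56 * K * (Q+1)) * (56 * K * (Q+1)))%nat by nia.
      assert ((Q+1) * (Q+1) <= 2 * Q * (Q + 1))%nat by nia.
      nia. }
    remember (12 * 56 * 56 * K * K)%nat as D.
    assert (0 < INR D) by (apply lt_0_INR; subst D; nia).
    apply le_INR in Hnn. rewrite !mult_INR in Hnn.
    replace (INR n ^ 2) with (INR n * INR n) by ring.
    apply (Rmult_le_reg_l (INR D)); auto.
    rewrite <- Rmult_assoc, Rinv_r by lra. lra.
Qed.
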